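(* Let $\alpha\in[0,1)$ and let $s\geq 2$ be an integer with $n=3s-1\geq f(\alpha)$. Then $\rho_{\alpha}\big(K_s\vee(2s-1)K_1\big)<n-3<\eta(n)$.
   Context: For a graph $G$, $A_{\alpha}(G)=\alpha D(G)+(1-\alpha)A(G)$ where $D(G)$ is the diagonal degree matrix and $A(G)$ the adjacency matrix, and $\rho_{\alpha}(G)$ is the largest eigenvalue of $A_{\alpha}(G)$. $\vee$ denotes join, $K_m$ the complete graph on $m$ vertices, $tK_1$ the edgeless graph on $t$ vertices. Define $f(\alpha)=14$ if $\alpha\in[0,\frac12]$, $f(\alpha)=17$ if $\alpha\in(\frac12,\frac23]$, $f(\alpha)=20$ if $\alpha\in(\frac23,\frac34]$, and $f(\alpha)=\frac{5}{1-\alpha}+1$ if $\alpha\in(\frac34,1)$. $\eta(n)$ is the largest root of $x^{3}-((\alpha+1)n+\alpha-4)x^{2}+(\alpha n^{2}+(\alpha^{2}-2\alpha-1)n-2\alpha+1)x-\alpha^{2}n^{2}+(5\alpha^{2}-3\alpha+2)n-10\alpha^{2}+15\alpha-8=0$. *)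

(* Defs.v *)
From HB Require Import structures.
From mathcomp Require Import all_boot all_order all_algebra.
From mathcomp Require Import reals.
Set Implicit Arguments. Unset Strict Implicit. Unset Printing Implicit Defensive.
Import Order.TTheory GRing.Theory Num.Theory.
Local Open Scope ring_scope.

(* A simple graph on vertex set 'I_n is given by a symmetric irreflexive rel. *)

Definition adjmx (R : realType) (n : nat) (e : rel 'I_n) : 'M[R]_n :=
  \matrix_(i, j) (if e i j then 1 else 0).

Definition degmx (R : realType) (n : nat) (e : rel 'I_n) : 'M[R]_n :=
  \matrix_(i, j) (if i == j then (#|[set k | e i k]|)%:R else 0).

Definition Aalpha (R : realType) (n : nat) (alpha : R) (e : rel 'I_n) : 'M[R]_n :=
  alpha *: degmx R e + (1 - alpha) *: adjmx R e.

Definition is_largest_eigenvalue (R : realType) (n : nat) (M : 'M[R]_n) (lam : R) : Prop :=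
  eigenvalue M lam /\ forall mu : R, eigenvalue M mu -> mu <= lam.

Definition is_largest_root (R : realType) (p : {poly R}) (x : R) : Prop :=
  root p x /\ forall y : R, root p y -> y <= x.

(* K_s \vee (n-s)K_1 on vertex set 'I_n: vertices 0..s-1 form the clique K_s,
   vertices s..n-1 are pairwise non-adjacent, and every clique vertex is
   adjacent to every other vertex. *)
Definition Ks_join_empty (n s : nat) : rel 'I_n :=
  fun i j => (i != j) && ((val i < s)%N || (val j < s)%N).

Definition f_alpha (R : realType) (alpha : R) : R :=
  if alpha <= 1/2 then 14
  else if alpha <= 2/3 then 17
  else if alpha <= 3/4 then 20
  else 5 / (1 - alpha) + 1.

Definition eta_poly (R : realType) (alpha : R) (n : nat) : {poly R} :=
  let N : R := n%:R in
  'X^3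
  - ((alpha + 1) * N + alpha - 4)%:P * 'X^2
  + (alpha * N ^+ 2 + (alpha ^+ 2 - 2 * alpha - 1) * N - 2 * alpha + 1)%:P * 'X
  + (- alpha ^+ 2 * N ^+ 2 + (5 * alpha ^+ 2 - 3 * alpha + 2) * N
     - 10 * alpha ^+ 2 + 15 * alpha - 8)%:P.

(* Main.v *)
Require Import Defs.
From HB Require Import structures.
From mathcomp Require Import all_boot all_order all_algebra.
From mathcomp Require Import reals.
From mathcomp Require Import polyrcf.
From mathcomp Require Import ring lra.
From mathcomp Require Import zify.
From Stdlib Require Import Lia.
Import Order.TTheory GRing.Theory Num.Theory.
Local Open Scope ring_scope.

Section M.
Variables (R : realType) (n s : nat).
Local Notation e := (@Ks_join_empty n s).

Lemma e_sym i j : e i j = e j i.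
Proof. by rewrite /Ks_join_empty eq_sym orbC. Qed.

Lemma adj_sum (F : 'I_n -> R) j :
  \sum_i (if e i j then F i else 0) =
  if (val j < s)%N then \sum_i F i - F j else \sum_(i | (val i < s)%N) F i.
Proof.
case: ifP => hj.
  rewrite [\sum_i F i](bigD1 j) //= (bigD1 j) //= /Ks_join_empty eqxx /= add0r.
  rewrite addrAC subrr add0r; apply: eq_bigr => i hi.
  by rewrite hi hj orbT.
rewrite [in RHS]big_mkcond /=; apply: eq_bigr => i _.
rewrite /Ks_join_empty hj orbF.
case hi: (val i < s)%N; rewrite ?andbF //=.
suff -> : i != j by [].
by apply/eqP => eij; rewrite -eij hi in hj.
Qed.

Lemma deg_val j : (#|[set k | e j k]|)%:R =
  if (val j < s)%N then n%:R - 1 else (\sum_(i < n | (val i < s)%N) (1:R)).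
Proof.
have -> : (#|[set k | e j k]|)%:R = \sum_(k in [set k | e j k]) (1:R).
  by rewrite sumr_const.
rewrite big_mkcond /=.
have -> : \sum_i (if i \in [set k | e j k] then (1:R) else 0) =
          \sum_i (if e i j then (fun _ => (1:R)) i else 0).
  by apply: eq_bigr => i _; rewrite inE e_sym.
rewrite adj_sum; case: ifP => // _.
by rewrite sumr_const card_ord.
Qed.

Lemma entry (alpha : R) (v : 'rV[R]_n) j :
  (v *m Aalpha alpha e) 0 j =
  if (val j < s)%N then alpha * (n%:R - 1) * v 0 j + (1 - alpha) * (\sum_i v 0 i - v 0 j)
  else alpha * (\sum_(i < n | (val i < s)%N) (1:R)) * v 0 j
       + (1 - alpha) * \sum_(i | (val i < s)%N) v 0 i.
Proof.
rewrite !mxE.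
have -> : \sum_j0 v 0 j0 * Aalpha alpha e j0 j =
   \sum_j0 (if j0 == j then alpha * (#|[set k | e j k]|)%:R * v 0 j else 0)
 + (1 - alpha) * \sum_j0 (if e j0 j then v 0 j0 else 0).
  rewrite mulr_sumr -big_split /=; apply: eq_bigr => i _.
  rewrite /Aalpha !mxE.
  case: eqP => [->|_]; [rewrite /Ks_join_empty eqxx /=; ring | case: (e i j) => /=; ring].
rewrite -big_mkcond /= big_pred1_eq adj_sum deg_val.
by case: ifP.
Qed.
End M.

Section E.
Variables (R : realType) (n s : nat) (a : R).
Hypothesis hsn : (s <= n)%N.
Hypothesis hsn' : (s < n)%N.
Local Notation e := (@Ks_join_empty n s).
Local Notation N := (@GRing.natmul R (@GRing.one R) n).
Local Notation S := (@GRing.natmul R (@GRing.one R) s).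

Definition qq (x : R) := (x - a * N + 1 - (1 - a) * S) * (x - a * S)
   - (1 - a) ^+ 2 * S * (N - S).

Lemma sumC (c : R) : \sum_(i < n | (val i < s)%N) c = c * S.
Proof.
rewrite -(big_ord_widen _ (fun _ => c) hsn) sumr_const card_ord.
by rewrite mulr_natr.
Qed.

Lemma sumI (c : R) : \sum_(i < n | ~~ (val i < s)%N) c = c * (N - S).
Proof.
have H : \sum_(i < n) c = \sum_(i < n | (val i < s)%N) c + \sum_(i < n | ~~ (val i < s)%N) c.
  exact: bigID.
rewrite sumC sumr_const card_ord in H.
rewrite mulrBr (mulr_natr c n) H; ring.
Qed.

Lemma rho_eig (rho : R) (hq : qq rho = 0) (hmax : forall x, qq x = 0 -> x <= rho) (h1 : a * N - 1 <= rho) (h2 : a * S <= rho) (hu : a < 1) (hS : 0 < S) : eigenvalue (Aalpha a e) rho.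
Proof.
pose x := rho - a * S; pose y := (1 - a) * S.
pose v : 'rV[R]_n := \row_j (if (val j < s)%N then x else y).
have Sv : \sum_i v 0 i = x * S + y * (N - S).
  rewrite (bigID (fun i : 'I_n => (val i < s)%N)) /=.
  rewrite -sumC -sumI; congr (_ + _); apply: eq_bigr => i hi; rewrite mxE.
    by rewrite hi.
  by rewrite (negbTE hi).
have SC : \sum_(i | (val i < s)%N) v 0 i = x * S.
  rewrite -sumC; apply: eq_bigr => i hi; by rewrite mxE hi.
apply/eigenvalueP; exists v.
  apply/rowP => j; rewrite entry Sv SC sumC !mxE.
  move: hq; rewrite /qq /x /y; case hj: (val j < s)%N => hq'; lra.
have hy : 0 < y.
  rewrite /y; apply: mulr_gt0; last exact: hS.
  by rewrite subr_gt0.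
apply/eqP => /rowP /(_ (Ordinal hsn')); rewrite !mxE ltnn => hy0.
by rewrite hy0 ltxx in hy.
Qed.

Lemma eig_le (rho : R) (hq : qq rho = 0) (hmax : forall x, qq x = 0 -> x <= rho) (h1 : a * N - 1 <= rho) (h2 : a * S <= rho) (hu : a < 1) (hS : 0 < S) mu : eigenvalue (Aalpha a e) mu -> mu <= rho.
Proof.
case/eigenvalueP => v hv vnz.
have hj j : (if (val j < s)%N then a * (N - 1) * v 0 j + (1 - a) * (\sum_i v 0 i - v 0 j)
  else a * S * v 0 j + (1 - a) * \sum_(i | (val i < s)%N) v 0 i) = mu * v 0 j.
  by have := congr1 (fun m : 'M[R]_(1, n) => m 0 j) hv; rewrite /= entry sumC mul1r mxE.
have [//|ltr] := lerP mu rho.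
have [SC eSC] : {SC | SC = \sum_(i | (val i < s)%N) v 0 i} by eexists.
have [SI eSI] : {SI | SI = \sum_(i | ~~ (val i < s)%N) v 0 i} by eexists.
have Sv : \sum_i v 0 i = SC + SI by rewrite (bigID (fun i : 'I_n => (val i < s)%N)) /= -eSC -eSI.
have d1p : 0 < mu - a * N + 1  by lra.
have d2p : 0 < mu - a * S by lra.
have E1 j : (val j < s)%N -> (mu - a * N + 1) * v 0 j = (1 - a) * (SC + SI).
  move=> hjs; have := hj j; rewrite hjs -Sv => H; lra.
have E2 j : ~~ (val j < s)%N -> (mu - a * S) * v 0 j = (1 - a) * SC.
  move=> hjs; have := hj j; rewrite (negbTE hjs) -eSC => H; lra.
have F1 : (mu - a * N + 1) * SC = (1 - a) * (SC + SI) * S.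
  rewrite [in LHS]eSC mulr_sumr -sumC; apply: eq_bigr => i hi; exact: E1.
have F2 : (mu - a * S) * SI = (1 - a) * SC * (N - S).
  rewrite eSI mulr_sumr -sumI; apply: eq_bigr => i hi; exact: E2.
have Q : SC * qq mu = (mu - a * S) * ((mu - a * N + 1) * SC - (1 - a) * (SC + SI) * S)
   + (1 - a) * S * ((mu - a * S) * SI - (1 - a) * SC * (N - S)).
  rewrite /qq; ring.
rewrite F1 F2 !subrr !mulr0 addr0 in Q.
have [SC0|SCn] := eqVneq SC 0.
  have SI0 : SI = 0.
    move: F2; rewrite SC0 mulr0 mul0r => /eqP; rewrite mulf_eq0 => /orP[/eqP|/eqP] //.
    lra.
  case/eqP: vnz; apply/rowP => j; rewrite mxE.
  case hjs: (val j < s)%N.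
    move: (E1 j hjs); rewrite SC0 SI0 addr0 mulr0 => /eqP; rewrite mulf_eq0 => /orP[/eqP|/eqP] //.
    lra.
  move: (E2 j (negbT hjs)); rewrite SC0 mulr0 => /eqP; rewrite mulf_eq0 => /orP[/eqP|/eqP] //.
  lra.
move/eqP: Q; rewrite mulf_eq0 (negbTE SCn) /= => /eqP /hmax; lra.
Qed.
End E.

Lemma quad (R : realType) (a N S : R) : 0 <= a -> a < 1 -> 5 <= S -> N = 3 * S - 1 ->
  3 < (1 - a) * (N - 3) ->
  exists rho, ((rho - a * N + 1 - (1 - a) * S) * (rho - a * S) - (1 - a) ^+ 2 * S * (N - S) = 0)
  /\ (forall x, (x - a * N + 1 - (1 - a) * S) * (x - a * S) - (1 - a) ^+ 2 * S * (N - S) <= 0 -> x <= rho)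
  /\ a * N - 1 <= rho /\ a * S <= rho /\ rho < N - 3.
Proof.
move=> a0 a1 S5 hN hk.
pose q x := (x - a * N + 1 - (1 - a) * S) * (x - a * S) - (1 - a) ^+ 2 * S * (N - S).
pose B := a * N - 1 + S.
pose C := q 0.
have qE x : q x = x ^+ 2 - B * x + C by rewrite /C /q /B; ring.
have qaS : q (a * S) <= 0.
  rewrite /q subrr mulr0 sub0r oppr_le0; apply: mulr_ge0; last lra.
  apply: mulr_ge0; last lra. by rewrite exprn_ge0 //; lra.
have D0 : 0 <= B ^+ 2 - 4 * C.
  have : B ^+ 2 - 4 * C = (2 * (a * S) - B) ^+ 2 - 4 * q (a * S) by rewrite qE; ring.
  move=> ->; have := sqr_ge0 (2 * (a * S) - B); lra.
pose r := Num.sqrt (B ^+ 2 - 4 * C).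
have r0 : 0 <= r by exact: sqrtr_ge0.
have r2 : r ^+ 2 = B ^+ 2 - 4 * C by exact: sqr_sqrtr.
pose rho := (B + r) / 2.
have qf x : q x = (x - rho) * (x - rho + r).
  rewrite qE /rho; apply/eqP; rewrite -subr_eq0; apply/eqP.
  have -> : x ^+ 2 - B * x + C - (x - (B + r) / 2) * (x - (B + r) / 2 + r) = (r ^+ 2 - (B ^+ 2 - 4 * C)) / 4 by field.
  by rewrite r2 subrr mul0r.
have hmax x : q x <= 0 -> x <= rho.
  rewrite qf => hx; rewrite leNgt; apply/negP => hlt.
  have : 0 < (x - rho) * (x - rho + r) by apply: mulr_gt0; lra.
  lra.
have qz : 0 < q (N - 3).
  have -> : q (N - 3) = (1 - a) * (4 * S ^+ 2 - 12 * S + 4) - (4 * S - 8).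
    by rewrite /q hN; ring.
  have hk' : 3 < (1 - a) * (3 * S - 4) by move: hk; rewrite hN; congr (_ < _); ring.
  have P1 : 0 < 4 * S ^+ 2 - 12 * S + 4 by nra.
  have P2 : 0 < (4 * S ^+ 2 - 12 * S + 4) * ((1 - a) * (3 * S - 4) - 3) by apply: mulr_gt0; lra.
  have P3 : 0 < (3 * S - 4) * ((1 - a) * (4 * S ^+ 2 - 12 * S + 4) - (4 * S - 8)) by nra.
  rewrite pmulr_rgt0 in P3 => //; lra.
have hB : B < 2 * (N - 3) by rewrite /B hN; nra.
have rlt : rho < N - 3.
  rewrite ltNge; apply/negP => hge.
  have : q (N - 3) <= 0.
    rewrite qf; apply: mulr_le0_ge0; first lra.
    rewrite /rho; lra.
  lra.
clearbody rho.
exists rho; split; first by rewrite -/(q rho) qf subrr mul0r.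
split; first exact: hmax.
split.
  apply: hmax.
  have -> : q (a * N - 1) = - ((1 - a) * S * (N - S - 1)) by rewrite /q; ring.
  rewrite oppr_le0; apply: mulr_ge0; last lra.
  apply: mulr_ge0; lra.
split; first exact: hmax.
exact: rlt.
Qed.

Lemma seq_max (R : realType) (l : seq R) x : x \in l ->
  exists2 m, m \in l & forall y, y \in l -> y <= m.
Proof.
elim: l x => [//|h t IH] x _.
case: t IH => [|h' t'] IH.
  by exists h; rewrite ?mem_seq1 // => y; rewrite mem_seq1 => /eqP ->.
have [m mt mmax] := IH h' (mem_head _ _).
exists (Num.max h m).
  by rewrite inE; case: (leP h m) => _; rewrite ?eqxx ?mt ?orbT.
move=> y; rewrite inE => /orP[/eqP ->|/mmax ym]; first by rewrite le_max lexx.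
by rewrite le_max ym orbT.
Qed.

Lemma eta_val (R : realType) (a : R) (n : nat) (x : R) :
  (eta_poly a n).[x] = x ^+ 3
  - ((a + 1) * n%:R + a - 4) * x ^+ 2
  + (a * n%:R ^+ 2 + (a ^+ 2 - 2 * a - 1) * n%:R - 2 * a + 1) * x
  + (- a ^+ 2 * n%:R ^+ 2 + (5 * a ^+ 2 - 3 * a + 2) * n%:R
     - 10 * a ^+ 2 + 15 * a - 8).
Proof. rewrite /eta_poly !hornerE /=. ring. Qed.

Lemma eta_part (R : realType) (a : R) (n : nat) : 0 <= a -> a < 1 -> 14 <= (n%:R : R) ->
  3 < (1 - a) * (n%:R - 3) ->
  exists eta, is_largest_root (eta_poly a n) eta /\ n%:R - 3 < eta.
Proof.
have [N eN] : {N : R | N = n%:R} by eexists.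
rewrite -eN => a0 a1 N14 hk.
have pz : (eta_poly a n).[N - 3] < 0.
  rewrite eta_val -eN.
  have -> : (N - 3) ^+ 3
  - ((a + 1) * N + a - 4) * (N - 3) ^+ 2
  + (a * N ^+ 2 + (a ^+ 2 - 2 * a - 1) * N - 2 * a + 1) * (N - 3)
  + (- a ^+ 2 * N ^+ 2 + (5 * a ^+ 2 - 3 * a + 2) * N
     - 10 * a ^+ 2 + 15 * a - 8) = -2 + 2 * a * (6 - 5 * a - N * (1 - a)) by ring.
  have : 6 - 5 * a - N * (1 - a) < 0 by nra.
  nra.
have pb : 0 < (eta_poly a n).[3 * N].
  rewrite eta_val -eN.
  nra.
have pn0 : eta_poly a n != 0.
  by apply/eqP => p0; move: pz; rewrite p0 horner0 ltxx.
have [x0 hx0 rx0] := @poly_ivt R (eta_poly a n) (N - 3) (3 * N) ltac:(lra)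
   ltac:(nra).
have hR := roots_on_rootsR pn0.
have inR y : root (eta_poly a n) y -> y \in rootsR (eta_poly a n).
  by move=> ry; rewrite -hR ry andbT.
have [m mR mmax] := @seq_max R _ _ (inR _ rx0).
have rm : root (eta_poly a n) m by move: (hR m); rewrite mR => /andP[].
exists m; split; first by split => // y /inR; exact: mmax.
have x0m := mmax _ (inR _ rx0).
move: hx0 => /andP[hl _].
have : x0 != N - 3.
  by apply/eqP => e0; move: rx0; rewrite /root e0 lt_eqF.
rewrite eq_sym => ne; have := lt_neqAle (N - 3) x0; rewrite ne hl /= => lt0.
lra.
Qed.

Lemma f_facts (R : realType) (a N : R) : 0 <= a -> a < 1 -> f_alpha a <= N ->
  14 <= N /\ 3 < (1 - a) * (N - 3).
Proof.
move=> a0 a1; rewrite /f_alpha.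
case: ifP => h1; first by move=> hN; split; nra.
case: ifP => h2; first by move=> hN; split; nra.
case: ifP => h3; first by move=> hN; split; nra.
have [w ew] : {w : R | w = 5 / (1 - a)} by eexists.
rewrite -ew => hN.
have hw : w * (1 - a) = 5 by rewrite ew divfK //; apply/eqP => e0; lra.
have a34 : 3 / 4 < a by rewrite ltNge h3.
split; nra.
Qed.

Theorem mainTheorem6 (R : realType) (alpha : R) (s n : nat) :
  0 <= alpha -> alpha < 1 ->
  (2 <= s)%N -> n = (3 * s - 1)%N ->
  f_alpha alpha <= n%:R ->
  exists rho eta : R,
    is_largest_eigenvalue (Aalpha alpha (@Ks_join_empty n s)) rho /\
    is_largest_root (eta_poly alpha n) eta /\
    rho < n%:R - 3 /\ n%:R - 3 < eta.
Proof.
move=> a0 a1 s2 en hf.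
have hsn' : (s < n)%N by rewrite en; lia.
have hsn : (s <= n)%N by apply: ltnW.
have [N14 hk] := @f_facts _ _ _ a0 a1 hf.
have eN : (n%:R : R) = 3 * s%:R - 1.
  by rewrite en natrB ?natrM //; lia.
have S5 : 5 <= (s%:R : R) by lra.
have [rho [hq [hmax [h1 [h2 hlt]]]]] := @quad _ _ _ _ a0 a1 S5 eN hk.
have [eta [heta hgt]] := @eta_part _ _ _ a0 a1 N14 hk.
have hS : 0 < (s%:R : R) by lra.
have hmax' : forall x, @qq R n s alpha x = 0 -> x <= rho.
  by move=> x hx; apply: hmax; rewrite -/(@qq R n s alpha x) hx.
exists rho, eta; split; last by [].
split.
  exact (@rho_eig R n s alpha hsn hsn' rho hq hmax' h1 h2 a1 hS).
move=> mu; exact (@eig_le R n s alpha hsn rho hq hmax' h1 h2 a1 hS mu).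
Qed.
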